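(* Let $A(n) = \sum_{k=0}^{n} \binom{n}{k}^2 \binom{n+k}{k}^2$ for integers $n \geq 0$ (the Apéry numbers). Then for every $n \geq 0$, $A(n)$ equals the coefficient of $x_1^n x_2^n x_3^n x_4^n$ in the Taylor expansion at the origin of the rational function $$\frac{1}{(1 - x_1 - x_2)(1 - x_3 - x_4) - x_1 x_2 x_3 x_4}.$$ *)

(* Defs.v *)
From HB Require Import structures.
From mathcomp Require Import all_boot all_order all_algebra.
Set Implicit Arguments. Unset Strict Implicit. Unset Printing Implicit Defensive.
Import Order.TTheory GRing.Theory Num.Theory.
Local Open Scope ring_scope.

(* s a b c d = coefficient of x1^a x2^b x3^c x4^d *)
Definition series4 := nat -> nat -> nat -> nat -> int.

Definition s_one : series4 :=
  fun a b c d => if [&& a == 0%N, b == 0%N, c == 0%N & d == 0%N] then 1 else 0.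

Definition s_add (f g : series4) : series4 := fun a b c d => f a b c d + g a b c d.
Definition s_opp (f : series4) : series4 := fun a b c d => - f a b c d.
Definition s_sub (f g : series4) : series4 := s_add f (s_opp g).

Definition s_mul (f g : series4) : series4 := fun a b c d =>
  \sum_(i < a.+1) \sum_(j < b.+1) \sum_(k < c.+1) \sum_(l < d.+1)
     f i j k l * g (a - i)%N (b - j)%N (c - k)%N (d - l)%N.

Definition X1 : series4 := fun a b c d =>
  if [&& a == 1%N, b == 0%N, c == 0%N & d == 0%N] then 1 else 0.
Definition X2 : series4 := fun a b c d =>
  if [&& a == 0%N, b == 1%N, c == 0%N & d == 0%N] then 1 else 0.
Definition X3 : series4 := fun a b c d =>
  if [&& a == 0%N, b == 0%N, c == 1%N & d == 0%N] then 1 else 0.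
Definition X4 : series4 := fun a b c d =>
  if [&& a == 0%N, b == 0%N, c == 0%N & d == 1%N] then 1 else 0.

Definition denom : series4 :=
  s_sub (s_mul (s_sub (s_sub s_one X1) X2) (s_sub (s_sub s_one X3) X4))
        (s_mul (s_mul X1 X2) (s_mul X3 X4)).

Definition apery (n : nat) : nat :=
  (\sum_(0 <= k < n.+1) 'C(n, k) ^ 2 * 'C(n + k, k) ^ 2)%N.

(* Main.v *)
Require Import Defs.
From HB Require Import structures.
From mathcomp Require Import all_boot all_order all_algebra.
From mathcomp Require Import zify ring.
From Stdlib Require Import FunctionalExtensionality.
Set Implicit Arguments. Unset Strict Implicit. Unset Printing Implicit Defensive.
Import Order.TTheory GRing.Theory Num.Theory.
Local Open Scope ring_scope.

Definition mono (e1 e2 e3 e4 : nat) : series4 := fun a b c d =>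
  if [&& a == e1, b == e2, c == e3 & d == e4] then 1 else 0.

Definition sh (F : series4) e1 e2 e3 e4 a b c d : int :=
  if [&& e1 <= a, e2 <= b, e3 <= c & e4 <= d]%N then
    F (a - e1)%N (b - e2)%N (c - e3)%N (d - e4)%N else 0.

Lemma sum_pick (h : nat -> int) e a :
  \sum_(i < a.+1) (if nat_of_ord i == e then h i else 0) = if (e <= a)%N then h e else 0.
Proof.
case: leqP => He.
- rewrite (bigD1 (Ordinal (He : (e < a.+1)%N))) //= eqxx big1 ?addr0 // => i Hi.
  rewrite ifF //; apply: contraNF Hi => /eqP Hie; apply/eqP/val_inj => /=. exact: Hie.
- rewrite big1 // => i _; rewrite ifF //.
  by rewrite (ltn_eqF (leq_trans (ltn_ord i) He)).
Qed.

Lemma mul_monoL e1 e2 e3 e4 g a b c d :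
  s_mul (mono e1 e2 e3 e4) g a b c d = sh g e1 e2 e3 e4 a b c d.
Proof.
rewrite /s_mul /mono /sh.
transitivity (\sum_(i < a.+1) if nat_of_ord i == e1 then
   \sum_(j < b.+1) if nat_of_ord j == e2 then
   \sum_(k < c.+1) if nat_of_ord k == e3 then
   \sum_(l < d.+1) if nat_of_ord l == e4 then g (a-i)%N (b-j)%N (c-k)%N (d-l)%N
   else 0 else 0 else 0 else 0).
  apply: eq_bigr => i _; case: (nat_of_ord i == e1) => /=; last first.
    by rewrite big1 // => j _; rewrite big1 // => k _; rewrite big1 // => l _; rewrite mul0r.
  apply: eq_bigr => j _; case: (nat_of_ord j == e2) => /=; last first.
    by rewrite big1 // => k _; rewrite big1 // => l _; rewrite mul0r.
  apply: eq_bigr => k _; case: (nat_of_ord k == e3) => /=; last first.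
    by rewrite big1 // => l _; rewrite mul0r.
  apply: eq_bigr => l _; case: (nat_of_ord l == e4) => /=; by rewrite ?mul1r ?mul0r.
under eq_bigr => i _ do under eq_bigr => j _ do under eq_bigr => k _ do
  rewrite (sum_pick (fun l => g (a-i)%N (b-j)%N (c-k)%N (d-l)%N)).
under eq_bigr => i _ do under eq_bigr => j _ do
  rewrite (sum_pick (fun k => if (e4 <= d)%N then g (a-i)%N (b-j)%N (c-k)%N (d-e4)%N else 0)).
under eq_bigr => i _ do
  rewrite (sum_pick (fun j => if (e3 <= c)%N then if (e4 <= d)%N then g (a-i)%N (b-j)%N (c-e3)%N (d-e4)%N else 0 else 0)).
rewrite (sum_pick (fun i => if (e2 <= b)%N then if (e3 <= c)%N then if (e4 <= d)%N then g (a-i)%N (b-e2)%N (c-e3)%N (d-e4)%N else 0 else 0 else 0)).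
by case: (e1 <= a)%N; case: (e2 <= b)%N; case: (e3 <= c)%N; case: (e4 <= d)%N.
Qed.

Lemma mulsDl f g h : s_mul (s_add f g) h = s_add (s_mul f h) (s_mul g h).
Proof.
apply: functional_extensionality => a; apply: functional_extensionality => b.
apply: functional_extensionality => c; apply: functional_extensionality => d.
rewrite /s_mul /s_add -big_split; apply: eq_bigr => i _.
rewrite -big_split; apply: eq_bigr => j _.
rewrite -big_split; apply: eq_bigr => k _.
rewrite -big_split; apply: eq_bigr => l _.
by rewrite mulrDl.
Qed.

Lemma mulsDr f g h : s_mul f (s_add g h) = s_add (s_mul f g) (s_mul f h).
Proof.
apply: functional_extensionality => a; apply: functional_extensionality => b.
apply: functional_extensionality => c; apply: functional_extensionality => d.
rewrite /s_mul /s_add -big_split; apply: eq_bigr => i _.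
rewrite -big_split; apply: eq_bigr => j _.
rewrite -big_split; apply: eq_bigr => k _.
rewrite -big_split; apply: eq_bigr => l _.
by rewrite mulrDr.
Qed.

Lemma mulsNl f h : s_mul (s_opp f) h = s_opp (s_mul f h).
Proof.
apply: functional_extensionality => a; apply: functional_extensionality => b.
apply: functional_extensionality => c; apply: functional_extensionality => d.
rewrite /s_mul /s_opp -sumrN; apply: eq_bigr => i _.
rewrite -sumrN; apply: eq_bigr => j _.
rewrite -sumrN; apply: eq_bigr => k _.
rewrite -sumrN; apply: eq_bigr => l _.
by rewrite mulNr.
Qed.

Lemma mulsNr f h : s_mul f (s_opp h) = s_opp (s_mul f h).
Proof.
apply: functional_extensionality => a; apply: functional_extensionality => b.
apply: functional_extensionality => c; apply: functional_extensionality => d.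
rewrite /s_mul /s_opp -sumrN; apply: eq_bigr => i _.
rewrite -sumrN; apply: eq_bigr => j _.
rewrite -sumrN; apply: eq_bigr => k _.
rewrite -sumrN; apply: eq_bigr => l _.
by rewrite mulrN.
Qed.

Lemma eq_addE x e f : (x == e + f)%N = (e <= x)%N && (x - e == f)%N.
Proof.
case: leqP => h /=.
  by rewrite -(eqn_add2l e (x - e)) (subnKC h).
apply/negbTE; rewrite neq_ltn (leq_trans h (leq_addr f e)) //.
Qed.

Lemma mono_mul e1 e2 e3 e4 f1 f2 f3 f4 :
  s_mul (mono e1 e2 e3 e4) (mono f1 f2 f3 f4) = mono (e1+f1) (e2+f2) (e3+f3) (e4+f4).
Proof.
apply: functional_extensionality => a; apply: functional_extensionality => b.
apply: functional_extensionality => c; apply: functional_extensionality => d.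
rewrite mul_monoL /sh /mono !eq_addE.
by case: (e1 <= a)%N; case: (e2 <= b)%N; case: (e3 <= c)%N; case: (e4 <= d)%N; rewrite /= ?andbF.
Qed.

Lemma denom_mul F a b c d : s_mul denom F a b c d =
  sh F 0 0 0 0 a b c d - sh F 1 0 0 0 a b c d - sh F 0 1 0 0 a b c d
  - sh F 0 0 1 0 a b c d - sh F 0 0 0 1 a b c d
  + sh F 1 0 1 0 a b c d + sh F 1 0 0 1 a b c d + sh F 0 1 1 0 a b c d
  + sh F 0 1 0 1 a b c d - sh F 1 1 1 1 a b c d.
Proof.
have -> : denom = s_sub (s_mul (s_sub (s_sub (mono 0 0 0 0) (mono 1 0 0 0)) (mono 0 1 0 0))
   (s_sub (s_sub (mono 0 0 0 0) (mono 0 0 1 0)) (mono 0 0 0 1)))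
   (s_mul (s_mul (mono 1 0 0 0) (mono 0 1 0 0)) (s_mul (mono 0 0 1 0) (mono 0 0 0 1))) by [].
rewrite /s_sub !mulsDl !mulsDr !mulsNl !mulsNr !mono_mul !mulsDl !mulsNl.
rewrite /s_add /s_opp !mul_monoL !addn0 !add0n.
ring.
Qed.

Lemma shB F1 F2 e1 e2 e3 e4 a b c d :
  sh (fun a b c d => F1 a b c d - F2 a b c d) e1 e2 e3 e4 a b c d =
  sh F1 e1 e2 e3 e4 a b c d - sh F2 e1 e2 e3 e4 a b c d.
Proof. by rewrite /sh; case: ifP; rewrite ?subr0. Qed.

Lemma sh0 F a b c d : sh F 0 0 0 0 a b c d = F a b c d.
Proof. by rewrite /sh /= !subn0. Qed.

Lemma sh_small (H : series4) a b c d :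
  (forall a' b' c' d', (a' + b' + c' + d' < a + b + c + d)%N -> H a' b' c' d' = 0) ->
  forall e1 e2 e3 e4, (0 < e1 + e2 + e3 + e4)%N -> sh H e1 e2 e3 e4 a b c d = 0.
Proof.
move=> IH e1 e2 e3 e4 he; rewrite /sh; case: ifP => // /and4P [h1 h2 h3 h4].
apply: IH; lia.
Qed.

Lemma uniq0 (H : series4) : (forall a b c d, s_mul denom H a b c d = 0) ->
  forall a b c d, H a b c d = 0.
Proof.
move=> E.
suff: forall n a b c d, (a + b + c + d <= n)%N -> H a b c d = 0.
  by move=> K a b c d; apply: (K _ a b c d).
elim=> [|n IH] a b c d hn.
- have key := E a b c d; rewrite denom_mul sh0 in key.
  have Hsm : forall a' b' c' d', (a' + b' + c' + d' < a + b + c + d)%N -> H a' b' c' d' = 0.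
    move=> *; lia.
  by rewrite !(sh_small Hsm) // !subr0 ?addr0 in key.
- have key := E a b c d; rewrite denom_mul sh0 in key.
  have Hsm : forall a' b' c' d', (a' + b' + c' + d' < a + b + c + d)%N -> H a' b' c' d' = 0.
    move=> a' b' c' d' h; apply: IH; lia.
  by rewrite !(sh_small Hsm) // !subr0 ?addr0 in key.
Qed.
Definition M p q j := ('C(p+q+j, p) * 'C(q+j, q))%N.

Lemma M_rec p q j : M p q j.+1 =
  ((if p is p'.+1 then M p' q j.+1 else 0) + (if q is q'.+1 then M p q' j.+1 else 0) + M p q j)%N.
Proof.
case: p => [|p]; case: q => [|q]; rewrite /M /= ?add0n ?addn0 ?addSn ?addnS ?bin0 ?binS; ring.
Qed.

Lemma M0 p q : M p q 0 = 'C(p+q, p).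
Proof. by rewrite /M !addn0 binn muln1. Qed.

Lemma M_rec0 p q : M p.+1 q.+1 0 = (M p q.+1 0 + M p.+1 q 0)%N.
Proof. rewrite !M0 !addSn !addnS binS; ring. Qed.

Definition U j a b : int := if (j <= a)%N && (j <= b)%N then (M (a-j) (b-j) j)%:Z else 0.

Lemma U_eq j p q : U j (j + p) (j + q) = (M p q j)%:Z.
Proof. by rewrite /U !leq_addr /= !addKn. Qed.

Lemma U_lt1 j a b : (a < j)%N -> U j a b = 0.
Proof. by move=> h; rewrite /U leqNgt h. Qed.

Lemma U_lt2 j a b : (b < j)%N -> U j a b = 0.
Proof. by move=> h; rewrite /U [(j <= b)%N]leqNgt h andbF. Qed.

Lemma U0 x y : U 0 x y = ('C(x+y, x))%:Z.
Proof. by rewrite /U !subn0 M0. Qed.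

Definition su j e1 e2 a b : int :=
  if (e1 <= a)%N && (e2 <= b)%N then U j (a - e1) (b - e2) else 0.

Lemma dU j a b : su j 0 0 a b - su j 1 0 a b - su j 0 1 a b =
  if j is j'.+1 then su j' 1 1 a b else ((a == 0%N) && (b == 0%N))%:R.
Proof.
rewrite /su !leq0n !subn0 /=.
case: j => [|j].
  case: a => [|a]; case: b => [|b]; rewrite /= ?subn1 /= !U0 ?addn0 ?add0n ?bin0 ?binn ?subr0 //.
  rewrite !addSn !addnS binS PoszD; ring.
case: a => [|a]; case: b => [|b]; rewrite /= ?andbT ?andbF ?subn1 /= ?subr0.
- by rewrite U_lt1.
- by rewrite U_lt1.
- by rewrite !U_lt2 // subrr.
case: (leqP j a) => ha; last by rewrite !U_lt1 // ?subrr ?subr0 //; apply: ltnW.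
case: (leqP j b) => hb; last by rewrite !U_lt2 // ?subrr ?subr0 //; apply: ltnW.
rewrite -(subnKC ha) -(subnKC hb).
move: (a - j)%N (b - j)%N => p q.
rewrite U_eq -!addSn U_eq M_rec PoszD PoszD.
case: p => [|p]; case: q => [|q].
- rewrite !addn0 U_lt1 // U_lt2 //; ring.
- rewrite U_lt1; last by rewrite addn0.
  rewrite (addnS j q) -addSn U_eq; ring.
- rewrite [X in _ - X]U_lt2; last by rewrite addn0.
  rewrite (addnS j p) -addSn U_eq; ring.
- rewrite (addnS j p) (addnS j q) -!addSn !U_eq; ring.
Qed.


Definition Gs : series4 := fun a b c d => \sum_(j < a.+1) U j a b * U j c d.

Lemma Gs_ext N a b c d : (a < N)%N -> Gs a b c d = \sum_(j < N) U j a b * U j c d.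
Proof.
move=> hN; rewrite /Gs -(subnKC hN) big_split_ord /=.
rewrite [X in _ = _ + X]big1 ?addr0 // => j _.
by rewrite U_lt1 ?mul0r // ltn_addr.
Qed.

Lemma sh_Gs e1 e2 e3 e4 a b c d :
  sh Gs e1 e2 e3 e4 a b c d = \sum_(j < a.+2) su j e1 e2 a b * su j e3 e4 c d.
Proof.
rewrite /sh /su; case: ifP => [/and4P [h1 h2 h3 h4] | h].
  rewrite (@Gs_ext a.+2); last by lia.
  by apply: eq_bigr => j _; rewrite h1 h2 h3 h4.
rewrite big1 // => j _.
move: h; case: (e1 <= a)%N; case: (e2 <= b)%N; case: (e3 <= c)%N; case: (e4 <= d)%N => //= _;
  by rewrite ?mul0r ?mulr0.
Qed.

Lemma Gs_inv a b c d : s_mul denom Gs a b c d = s_one a b c d.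
Proof.
rewrite denom_mul !sh_Gs.
transitivity (\sum_(j < a.+2) ((su j 0 0 a b - su j 1 0 a b - su j 0 1 a b) *
   (su j 0 0 c d - su j 1 0 c d - su j 0 1 c d) - su j 1 1 a b * su j 1 1 c d)).
  rewrite [RHS](eq_bigr (fun j : 'I_a.+2 =>
    su j 0 0 a b * su j 0 0 c d - su j 1 0 a b * su j 0 0 c d - su j 0 1 a b * su j 0 0 c d
  - su j 0 0 a b * su j 1 0 c d - su j 0 0 a b * su j 0 1 c d
  + su j 1 0 a b * su j 1 0 c d + su j 1 0 a b * su j 0 1 c d + su j 0 1 a b * su j 1 0 c d
  + su j 0 1 a b * su j 0 1 c d - su j 1 1 a b * su j 1 1 c d)); last by move=> j _; ring.
  do 10 rewrite ?sumrB ?big_split /=. rewrite ?sumrN. ring.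
under eq_bigr => j _ do rewrite !dU.
rewrite big_ord_recl /= sumrB big_ord_recl big_ord_recr /=.
rewrite /bump !leq0n !add0n !add1n.
have -> : su a.+1 1 1 a b = 0.
  rewrite /su; case: ifP => // _; rewrite U_lt1 //; lia.
rewrite mul0r addr0 addrK subrK /s_one.
by case: (a == 0%N); case: (b == 0%N); case: (c == 0%N); case: (d == 0%N); rewrite /= ?mulr0 ?mul0r ?mulr1.
Qed.


Lemma Gs_val n : Gs n n n n = (apery n)%:Z.
Proof.
rewrite /Gs /apery big_mkord -natz natr_sum.
rewrite (reindex_inj rev_ord_inj) /=.
apply: eq_bigr => k _.
have hk : (k <= n)%N by rewrite -ltnS.
rewrite subSS /U leq_subr /= subKn // /M subnKC //.
have -> : (k + k + (n - k) = n + k)%N by lia.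
rewrite natz -!PoszM; congr Posz; ring.
Qed.

Theorem theorem1p1 :
  (exists F : series4, s_mul denom F = s_one) /\
  (forall F : series4, s_mul denom F = s_one ->
     forall n : nat, F n n n n = ((apery n)%:Z)%R).
Proof.
split.
  exists Gs.
  apply: functional_extensionality => a; apply: functional_extensionality => b.
  apply: functional_extensionality => c; apply: functional_extensionality => d.
  exact: Gs_inv.
move=> F hF n.
have H := @uniq0 (fun a b c d => F a b c d - Gs a b c d).
rewrite -Gs_val; apply/eqP; rewrite -subr_eq0; apply/eqP; apply: H => a b c d.
have e1 := denom_mul F a b c d; have e2 := denom_mul Gs a b c d.
rewrite (congr1 (fun f => f a b c d) hF) in e1; rewrite Gs_inv in e2.
rewrite denom_mul !shB; lia.
Qed.
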